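(* Let $\alpha>1$ and $f\in\mathcal{B}_1(\alpha)$. Then for every $r\in(0,1)$ and all real $\theta_1<\theta_2$, writing $z=re^{i\theta}$, \[ \int_{\theta_1}^{\theta_2}\left[\operatorname{Re}\left(1+\frac{zf''(z)}{f'(z)}\right)+(\alpha-1)\operatorname{Re}\left(\frac{zf'(z)}{f(z)}\right)\right]d\theta>-\pi, \] i.e. $\int_{\theta_1}^{\theta_2}\operatorname{Re}P[\alpha,f](re^{i\theta})\,d\theta>-\pi$.
   Context: $\mathbb{D}$ is the unit disk, $\mathcal{A}$ the class of analytic $f$ in $\mathbb{D}$ with $f(z)=z+\sum_{n\ge2}a_nz^n$, and $\mathcal{P}$ the class of analytic $h$ in $\mathbb{D}$ with $h(0)=1$, $\operatorname{Re}h>0$. For $\alpha>0$, $\mathcal{B}_1(\alpha)$ is the class of functions $f(z)=\left[\alpha\int_0^z t^{\alpha-1}h(t)\,dt\right]^{1/\alpha}$ with $h\in\mathcal{P}$ (principal powers), equivalently $f\in\mathcal{A}$ with $\operatorname{Re}\left[\left(\frac{f(z)}{z}\right)^{\alpha-1}f'(z)\right]>0$ in $\mathbb{D}$. For $f\in\mathcal{A}$, $P[\alpha,f](z)=1+\frac{zf''(z)}{f'(z)}+(\alpha-1)\frac{zf'(z)}{f(z)}$. *)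

(* Defs.v *)
From Stdlib Require Import Reals.
From Coquelicot Require Import Coquelicot.
Open Scope R_scope.

Definition Cexp (z : C) : C :=
  (exp (Re z) * cos (Im z), exp (Re z) * sin (Im z)).

(* Principal argument, with values in (-PI, PI]. *)
Definition Carg (z : C) : R :=
  let x := Re z in let y := Im z in
  if Rlt_dec 0 x then atan (y / x)
  else if Rlt_dec x 0 then
    (if Rle_dec 0 y then atan (y / x) + PI else atan (y / x) - PI)
  else if Rlt_dec 0 y then PI / 2
  else if Rlt_dec y 0 then - (PI / 2)
  else 0.

Definition Clog (z : C) : C := (ln (Cmod z), Carg z).

(* Principal power w^p for a real exponent p (0^p := 0). *)
Definition Cpow (w : C) (p : R) : C :=
  if Req_EM_T (Cmod w) 0 then RtoC 0 else Cexp (Cmult (RtoC p) (Clog w)).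

(* Real power s^p for s > 0 (and 0 for s <= 0; used only for s in [0,1], p > 0). *)
Definition rpow (s p : R) : R := if Rlt_dec 0 s then Rpower s p else 0.

Definition inD (z : C) : Prop := Cmod z < 1.

Definition analytic_D (f : C -> C) : Prop :=
  forall z : C, inD z -> ex_derive (K := C_AbsRing) (V := C_NormedModule) f z.

Definition classA (f : C -> C) : Prop :=
  analytic_D f /\ f (RtoC 0) = RtoC 0 /\
  is_derive (K := C_AbsRing) (V := C_NormedModule) f (RtoC 0) (RtoC 1).

Definition classP (h : C -> C) : Prop :=
  analytic_D h /\ h (RtoC 0) = RtoC 1 /\ (forall z, inD z -> 0 < Re (h z)).

(* B_1(alpha): f(z) = [alpha int_0^z t^(alpha-1) h(t) dt]^(1/alpha).
   Parametrising the segment t = s z (s in [0,1]) gives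
   alpha int_0^z t^(alpha-1) h(t) dt = z^alpha * g(z) with
   g(z) = alpha int_0^1 s^(alpha-1) h(s z) ds  (Re g > 0, g(0) = 1),
   and the analytic branch of the 1/alpha power is f(z) = z * g(z)^(1/alpha)
   with the principal power of g(z). *)
Definition Bazilevic_g (alpha : R) (h : C -> C) (z : C) : C :=
  Cmult (RtoC alpha)
    (RInt (V := C_R_CompleteNormedModule)
       (fun s : R => Cmult (RtoC (rpow s (alpha - 1))) (h (Cmult (RtoC s) z)))
       0 1).

Definition classB1 (alpha : R) (f : C -> C) : Prop :=
  classA f /\
  exists h : C -> C, classP h /\
    forall z, inD z -> f z = Cmult z (Cpow (Bazilevic_g alpha h z) (/ alpha)).

Definition Pfun (alpha : R) (f f' f'' : C -> C) (z : C) : C :=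
  Cplus (Cplus (RtoC 1) (Cdiv (Cmult z (f'' z)) (f' z)))
        (Cmult (RtoC (alpha - 1)) (Cdiv (Cmult z (f' z)) (f z))).

(* Main.v *)
Require Import Defs.
From Stdlib Require Import Reals Lra Psatz Classical ClassicalEpsilon.
From Coquelicot Require Import Coquelicot.
Open Scope R_scope.

Lemma RInt_not_ex (F : R -> R) a b : ~ ex_RInt F a b -> RInt F a b = 0.
Proof.
intros H. unfold RInt, iota, lim. simpl.
unfold R_complete_lim.
rewrite (Lub_Rbar_eqset _ (fun _ => True)).
- rewrite (is_lub_Rbar_unique _ p_infty). reflexivity.
  split.
  + intros x _. exact I.
  + intros l Hl. destruct l as [l| |]; simpl; auto.
    specialize (Hl (l+1) I). simpl in Hl. lra.
    specialize (Hl 0 I). simpl in Hl. exact Hl.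
- intros x; split; auto. intros _ y Hy. exfalso. apply H. exists y. exact Hy.
Qed.

Section FTC.
Variables (G F : R -> R).
Hypothesis HG : forall x, is_derive G x (F x).

Lemma tag_ex x y : exists c, x <= y -> x <= c <= y /\ G y - G x = F c * (y - x).
Proof.
destruct (Rle_dec x y) as [Hxy|Hxy].
- destruct (MVT_gen G x y F) as [c [Hc1 Hc2]].
  + intros t _; apply HG.
  + intros t _. apply continuity_pt_filterlim. apply (ex_derive_continuous (K:=R_AbsRing) (V:=R_NormedModule) G).
    eexists; apply HG.
  + exists c. intros _. rewrite Rmin_left in Hc1 by lra. rewrite Rmax_right in Hc1 by lra.
    split; [exact Hc1|exact Hc2].
- exists x. intros H; lra.
Qed.

Definition tag x y := proj1_sig (constructive_indefinite_description _ (tag_ex x y)).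
Lemma tag_spec x y : x <= y -> x <= tag x y <= y /\ G y - G x = F (tag x y) * (y - x).
Proof. unfold tag. destruct (constructive_indefinite_description _ _) as [c Hc]. exact Hc. Qed.

Lemma RS_tele l : forall x0, sorted Rle (x0 :: l) ->
  Riemann_sum F (SF_seq_f2 tag (x0 :: l)) = G (seq.last x0 l) - G x0.
Proof.
induction l as [|x1 l IH]; intros x0 Hs.
- simpl. unfold Riemann_sum. simpl. rewrite Rminus_eq_0. reflexivity.
- rewrite SF_cons_f2 by (simpl; apply Nat.lt_0_succ).
  rewrite Riemann_sum_cons. simpl seq.head. simpl in Hs. destruct Hs as [H01 Hs].
  rewrite IH by exact Hs. simpl seq.last.
  replace (SF_h (SF_seq_f2 tag (x1 :: l))) with x1 by reflexivity.
  simpl fst. simpl snd.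
  destruct (tag_spec x0 x1 H01) as [_ E].
  change (plus (scal (x1 - x0) (F (tag x0 x1))) (G (seq.last x1 l) - G x1))
    with ((x1 - x0) * F (tag x0 x1) + (G (seq.last x1 l) - G x1)).
  lra.
Qed.

Lemma ftc_lite a b I : a < b -> is_RInt F a b I -> I = G b - G a.
Proof.
intros Hab HI.
assert (Hall : forall eps : posreal, Rabs (G b - G a - I) < eps).
{ intros eps.
  specialize (HI _ (locally_ball I eps)).
  destruct HI as [d Hd].
  destruct (seq_step_unif_part_ex a b d) as [n Hn].
  set (l := unif_part a b n).
  destruct (Riemann_fine_unif_part tag a b n) as [H1 [H2 [H3 H4]]].
  { intros x y Hxy; apply (tag_spec x y Hxy). }
  { lra. }
  assert (Hlx : SF_lx (SF_seq_f2 tag l) = l).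
  { apply SF_lx_f2. unfold l, unif_part. rewrite seq.size_mkseq. apply Nat.lt_0_succ. }
  specialize (Hd (SF_seq_f2 tag l)).
  assert (Hb := Hd).
  clear Hd.
  refine (_ (Hb _ _)).
  - intros Hball. unfold ball in Hball; simpl in Hball. unfold AbsRing_ball in Hball.
    rewrite sign_eq_1 in Hball by lra.
    change (scal 1 (Riemann_sum F (SF_seq_f2 tag l))) with (1 * Riemann_sum F (SF_seq_f2 tag l)) in Hball; rewrite Rmult_1_l in Hball.
    assert (Hl : l = (a :: seq.behead l)%list).
    { assert (Hs0 : forall (s : list R), (0 < seq.size s)%nat -> s = (seq.head 0 s :: seq.behead s)%list).
      { intros s Hs; destruct s; [inversion Hs|reflexivity]. }
      rewrite (Hs0 l) at 1. unfold l at 1. rewrite head_unif_part. reflexivity.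
      unfold l, unif_part. rewrite seq.size_mkseq. apply Nat.lt_0_succ. }
    assert (Hsort : sorted Rle l) by (apply unif_part_sort; lra).
    rewrite Hl in Hball, Hsort.
    rewrite RS_tele in Hball by exact Hsort.
    assert (Hlast : seq.last a (seq.behead l) = b).
    { transitivity (seq.last 0 (a :: seq.behead l)); [reflexivity|]. rewrite <- Hl. apply last_unif_part. }
    rewrite Hlast in Hball.
    unfold minus, plus, opp in Hball; simpl in Hball. 
    exact Hball.
  - simpl. rewrite Hlx. exact Hn.
  - rewrite Rmin_left by lra. rewrite Rmax_right by lra. unfold l; auto. }
destruct (Req_dec (G b - G a - I) 0) as [E|E]; [lra|].
exfalso. assert (P : 0 < Rabs (G b - G a - I)) by (apply Rabs_pos_lt; exact E).
specialize (Hall (mkposreal _ P)). simpl in Hall. lra.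
Qed.
End FTC.

Lemma Rd_mult (f g : R -> R) x df dg : is_derive f x df -> is_derive g x dg ->
  is_derive (fun t => f t * g t) x (df * g x + f x * dg).
Proof. intros H1 H2. apply (is_derive_mult f g x df dg H1 H2). intros; apply Rmult_comm. Qed.
Lemma Rd_plus (f g : R -> R) x df dg : is_derive f x df -> is_derive g x dg ->
  is_derive (fun t => f t + g t) x (df + dg).
Proof. intros H1 H2. apply (is_derive_plus f g x df dg H1 H2). Qed.
Lemma Rd_comp (f g : R -> R) x df dg : is_derive f (g x) df -> is_derive g x dg ->
  is_derive (fun t => f (g t)) x (dg * df).
Proof. intros H1 H2. apply (is_derive_comp f g x df dg H1 H2). Qed.
Lemma Rd_const (c x : R) : is_derive (fun _ => c) x 0.
Proof. apply (is_derive_const c x). Qed.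
Lemma Rd_id (x : R) : is_derive (fun t => t) x 1.
Proof. apply (is_derive_id x). Qed.
Lemma Rd_ext (f g : R -> R) (x d d' : R) : (forall t, f t = g t) -> d = d' -> is_derive f x d -> is_derive g x d'.
Proof. intros H E Hd. subst d'. apply (is_derive_ext f g x d H Hd). Qed.

Definition dC (u : R -> C) (t : R) (d : C) :=
  is_derive (fun s => fst (u s)) t (fst d) /\ is_derive (fun s => snd (u s)) t (snd d).

Lemma dC_ext (u v : R -> C) t d d' : (forall s, u s = v s) -> d = d' -> dC u t d -> dC v t d'.
Proof.
intros H E [H1 H2]; subst d'; split.
- apply (Rd_ext _ _ t _ _ (fun s => f_equal fst (H s)) eq_refl H1).
- apply (Rd_ext _ _ t _ _ (fun s => f_equal snd (H s)) eq_refl H2).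
Qed.

Lemma dC_ext_loc (u v : R -> C) t d : locally t (fun s => u s = v s) -> dC u t d -> dC v t d.
Proof.
intros H [H1 H2]; split.
- apply (is_derive_ext_loc (fun s => fst (u s))); [|exact H1].
  apply (filter_imp (fun s => u s = v s)); [intros s E; rewrite E; reflexivity| exact H].
- apply (is_derive_ext_loc (fun s => snd (u s))); [|exact H2].
  apply (filter_imp (fun s => u s = v s)); [intros s E; rewrite E; reflexivity| exact H].
Qed.

Lemma dC_const (c : C) t : dC (fun _ => c) t 0%C.
Proof. split; apply Rd_const. Qed.

Lemma dC_RtoC (f : R -> R) t df : is_derive f t df -> dC (fun s => RtoC (f s)) t (RtoC df).
Proof. intros H; split; simpl; [exact H| apply Rd_const]. Qed.

Lemma dC_plus u v t du dv : dC u t du -> dC v t dv -> dC (fun s => Cplus (u s) (v s)) t (Cplus du dv).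
Proof. intros [H1 H2] [H3 H4]; split; simpl; apply Rd_plus; assumption. Qed.

Lemma dC_mult u v t du dv : dC u t du -> dC v t dv ->
  dC (fun s => Cmult (u s) (v s)) t (Cplus (Cmult du (v t)) (Cmult (u t) dv)).
Proof.
intros [H1 H2] [H3 H4]; split; simpl.
- eapply Rd_ext; [intros; reflexivity| |].
  2: apply (Rd_plus _ _ _ _ _ (Rd_mult _ _ _ _ _ H1 H3) (Rd_ext _ _ _ _ _ (fun s => eq_sym (Ropp_mult_distr_l _ _)) eq_refl (Rd_mult _ _ _ _ _ (is_derive_opp _ _ _ H2) H4))).
  unfold opp; simpl. ring.
- eapply Rd_ext; [intros; reflexivity| |].
  2: apply (Rd_plus _ _ _ _ _ (Rd_mult _ _ _ _ _ H1 H4) (Rd_mult _ _ _ _ _ H2 H3)).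
  simpl. ring.
Qed.

Lemma norm_CR (x : C) : @norm R_AbsRing C_R_NormedModule x = Cmod x.
Proof.
unfold norm; simpl. unfold prod_norm, Cmod. simpl. unfold abs; simpl.
change (@norm R_AbsRing R_NormedModule) with Rabs. f_equal. rewrite !Rmult_1_r. rewrite <- !Rabs_mult. rewrite !Rabs_pos_eq; try apply Rle_0_sqr. reflexivity.
Qed.

Lemma sqrt2_lt_2 : sqrt 2 < 2.
Proof. assert (H := sqrt_sqrt 2). assert (H0 := sqrt_pos 2). nra. Qed.

Lemma loc_C_to_CR (w : C) (P : C -> Prop) :
  @locally (AbsRing_UniformSpace C_AbsRing) w P ->
  @locally (NormedModule.UniformSpace R_AbsRing C_R_NormedModule) w P.
Proof.
intros [e He]. assert (Hp : 0 < e / 2) by (destruct e; simpl; lra).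
exists (mkposreal _ Hp). intros y [Hy1 Hy2]. apply He.
simpl in Hy1, Hy2. unfold AbsRing_ball, abs, minus, plus, opp in Hy1, Hy2 |- *. simpl in *.
assert (Hc := Cmod_2Rmax (Cminus y w)).
unfold Cminus, Cplus, Copp in Hc. simpl in Hc.
assert (Hm : Rmax (Rabs (fst y + - fst w)) (Rabs (snd y + - snd w)) < e / 2).
{ apply Rmax_lub_lt; assumption. }
assert (H2 := sqrt2_lt_2). assert (H0 := sqrt_pos 2).
assert (Hmp : 0 <= Rmax (Rabs (fst y + - fst w)) (Rabs (snd y + - snd w))).
{ eapply Rle_trans; [apply Rabs_pos|apply Rmax_l]. }
change (Cmod (Cplus y (Copp w)) < e). unfold Cplus, Copp; simpl. nra.
Qed.

Lemma Cdiff_R (f : C -> C) w D :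
  is_derive (K := C_AbsRing) (V := C_NormedModule) f w D ->
  filterdiff (K := R_AbsRing) (U := C_R_NormedModule) (V := C_R_NormedModule) f
    (@locally (NormedModule.UniformSpace R_AbsRing C_R_NormedModule) w) (fun y => Cmult y D).
Proof.
intros [_ Hd]. split.
- apply Build_is_linear.
  + intros x y. apply injective_projections; cbn; ring.
  + intros k x. apply injective_projections; cbn; ring.
  + exists (Cmod D + 1). split. { generalize (Cmod_ge_0 D); lra. }
    intros x. rewrite !norm_CR, Cmod_mult. rewrite Rmult_comm.
    apply Rmult_le_compat_r. apply Cmod_ge_0. lra.
- intros x Hx. apply (@is_filter_lim_locally_unique R_AbsRing C_R_NormedModule) in Hx. subst x.
  intros eps. specialize (Hd w (fun P H => H) eps).
  apply loc_C_to_CR. revert Hd. apply filter_imp. intros y Hy.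
  rewrite !norm_CR. exact Hy.
Qed.

Lemma dC_to_fd (p : R -> C) t dp : dC p t dp ->
  filterdiff (K := R_AbsRing) (U := AbsRing_NormedModule R_AbsRing) (V := C_R_NormedModule) p
    (locally t) (fun y => scal y dp).
Proof.
intros [H1 H2].
assert (H := filterdiff_comp'_2 (K := R_AbsRing) (T := AbsRing_NormedModule R_AbsRing)
   (U := R_NormedModule) (V := R_NormedModule) (W := C_R_NormedModule)
   (fun s => fst (p s)) (fun s => snd (p s)) (fun a b => (a, b)) t _ _ (fun a b => (a, b)) H1 H2).
refine (filterdiff_ext_lin _ _ _ (filterdiff_ext _ _ _ _ (H _)) _).
- intros y. simpl. destruct (p y); reflexivity.
- apply filterdiff_linear. apply (is_linear_prod (fun t => fst t) (fun t => snd t)).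
  apply is_linear_fst. apply is_linear_snd.
- intros y. reflexivity.
Qed.

Lemma fd_to_dC (q : R -> C) t dq :
  filterdiff (K := R_AbsRing) (U := AbsRing_NormedModule R_AbsRing) (V := C_R_NormedModule) q
    (locally t) (fun y => scal y dq) -> dC q t dq.
Proof.
intros H. split.
- assert (H' := filterdiff_comp' q (fun c : C_R_NormedModule => fst c) t _ _ H
     (filterdiff_linear _ (is_linear_fst (K := R_AbsRing) (U := R_NormedModule) (V := R_NormedModule)))).
  refine (filterdiff_ext_lin _ _ _ H' _). intros y; reflexivity.
- assert (H' := filterdiff_comp' q (fun c : C_R_NormedModule => snd c) t _ _ H
     (filterdiff_linear _ (is_linear_snd (K := R_AbsRing) (U := R_NormedModule) (V := R_NormedModule)))).
  refine (filterdiff_ext_lin _ _ _ H' _). intros y; reflexivity.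
Qed.

Lemma dC_chain (f : C -> C) (p : R -> C) t dp D :
  dC p t dp -> is_derive (K := C_AbsRing) (V := C_NormedModule) f (p t) D ->
  dC (fun s => f (p s)) t (Cmult D dp).
Proof.
intros Hp Hf. apply fd_to_dC.
assert (H := filterdiff_comp' p f t _ _ (dC_to_fd p t dp Hp) (Cdiff_R f (p t) D Hf)).
refine (filterdiff_ext_lin _ _ _ H _).
intros y. apply injective_projections; cbn; ring.
Qed.

Lemma Rd_val (f : R -> R) (x d d' : R) : is_derive f x d -> d = d' -> is_derive f x d'.
Proof. intros H E; subst; exact H. Qed.

Lemma Rd_sq (f : R -> R) x df : is_derive f x df -> is_derive (fun s => f s ^ 2) x (2 * f x * df).
Proof.
intros H. refine (Rd_ext (fun s => f s * f s) _ x (df * f x + f x * df) _ _ _ (Rd_mult _ _ _ _ _ H H)).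
- intros; ring.
- ring.
Qed.

Definition Lg (w : C) : C := (ln (fst w ^ 2 + snd w ^ 2) / 2, atan (snd w / fst w)).

Lemma dC_Cexp (u : R -> C) (t : R) (du : C) : dC u t du -> dC (fun s => Cexp (u s)) t (Cmult (Cexp (u t)) du).
Proof.
intros [H1 H2]. unfold Cexp, Re, Im. split; simpl.
- apply Rd_val with (1 := Rd_mult _ _ _ _ _ (Rd_comp exp _ _ _ _ (is_derive_exp _) H1)
                                      (Rd_comp cos _ _ _ _ (is_derive_cos _) H2)).
  ring.
- apply Rd_val with (1 := Rd_mult _ _ _ _ _ (Rd_comp exp _ _ _ _ (is_derive_exp _) H1)
                                      (Rd_comp sin _ _ _ _ (is_derive_sin _) H2)).
  ring.
Qed.

Lemma N_pos (w : C) : w <> 0%C -> 0 < fst w ^ 2 + snd w ^ 2.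
Proof.
intros Hw. destruct w as [a b]. simpl.
destruct (Req_dec a 0); destruct (Req_dec b 0).
- subst. exfalso; apply Hw; reflexivity.
- assert (0 < b^2) by (apply pow2_gt_0; auto). assert (0 <= a^2) by apply pow2_ge_0. lra.
- assert (0 < a^2) by (apply pow2_gt_0; auto). assert (0 <= b^2) by apply pow2_ge_0. lra.
- assert (0 < a^2) by (apply pow2_gt_0; auto). assert (0 <= b^2) by apply pow2_ge_0. lra.
Qed.

Lemma dC_inv (u : R -> C) (t : R) (du : C) : u t <> 0%C -> dC u t du ->
  dC (fun s => Cinv (u s)) t (Cmult (Copp du) (Cmult (Cinv (u t)) (Cinv (u t)))).
Proof.
intros Hu [H1 H2]. assert (HN := N_pos _ Hu).
assert (HNd := Rd_plus _ _ _ _ _ (Rd_sq _ _ _ H1) (Rd_sq _ _ _ H2)).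
unfold Cinv, Re, Im. split; simpl.
- apply Rd_val with (1 := is_derive_div _ _ _ _ _ H1 HNd (Rgt_not_eq _ _ HN)).
  destruct (u t) as [a b]. destruct du as [a' b']. simpl in *. field. lra.
- apply Rd_val with (1 := is_derive_div _ _ _ _ _ (is_derive_opp _ _ _ H2) HNd (Rgt_not_eq _ _ HN)).
  destruct (u t) as [a b]. destruct du as [a' b']. simpl in *. unfold opp; simpl. field. lra.
Qed.

Lemma dC_Lg (u : R -> C) (t : R) (du : C) : 0 < fst (u t) -> dC u t du ->
  dC (fun s => Lg (u s)) t (Cmult du (Cinv (u t))).
Proof.
intros Hu [H1 H2].
assert (Hu0 : u t <> 0%C). { intros E. rewrite E in Hu. simpl in Hu. lra. }
assert (HN := N_pos _ Hu0).
assert (HNd := Rd_plus _ _ _ _ _ (Rd_sq _ _ _ H1) (Rd_sq _ _ _ H2)).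
unfold Lg, Cinv, Re, Im. split; simpl.
- apply Rd_val with (1 := Rd_mult _ _ _ _ _ (Rd_comp ln _ _ _ _ (is_derive_ln _ HN) HNd) (Rd_const (/2) t)).
  destruct (u t) as [a b]. destruct du as [a' b']. simpl in *. field. lra.
- apply Rd_val with (1 := Rd_comp atan _ _ _ _ (is_derive_atan _) (is_derive_div _ _ _ _ _ H2 H1 (Rgt_not_eq _ _ Hu))).
  destruct (u t) as [a b]. destruct du as [a' b']. simpl in *. unfold Rsqr.
  assert (0 < 1 + b / a * (b / a)) by (assert (0 <= b/a * (b/a)) by nra; lra).
  assert (a * (a * 1) + b * (b * 1) <> 0) by (simpl in HN; nra).
  field. repeat split; lra.
Qed.

Lemma Cexp_add (a b : C) : Cexp (Cplus a b) = Cmult (Cexp a) (Cexp b).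
Proof.
unfold Cexp, Re, Im. destruct a as [a1 a2]; destruct b as [b1 b2]; simpl.
rewrite exp_plus, cos_plus, sin_plus.
apply injective_projections; simpl; ring.
Qed.

Lemma Cexp_neq0 (a : C) : Cexp a <> 0%C.
Proof.
intros E. unfold Cexp, Re, Im in E. injection E as E1 E2.
assert (He := exp_pos (fst a)).
apply Rmult_integral in E1; apply Rmult_integral in E2.
destruct E1 as [E1|E1]; [lra|]. destruct E2 as [E2|E2]; [lra|].
assert (H := sin2_cos2 (snd a)). unfold Rsqr in H. rewrite E1, E2 in H. lra.
Qed.

Lemma Lg_Cexp (v : C) : - (PI / 2) < snd v < PI / 2 -> Lg (Cexp v) = v.
Proof.
intros Hb. destruct v as [a b]. simpl in Hb. unfold Lg, Cexp, Re, Im; simpl.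
apply injective_projections; simpl.
- replace (exp a * cos b * (exp a * cos b * 1) + exp a * sin b * (exp a * sin b * 1))
    with (exp (a + a) * (Rsqr (sin b) + Rsqr (cos b))) by (rewrite exp_plus; unfold Rsqr; ring).
  rewrite sin2_cos2, Rmult_1_r, ln_exp. field.
- assert (Hc : 0 < cos b) by (apply cos_gt_0; lra).
  assert (He := exp_pos a).
  replace (exp a * sin b / (exp a * cos b)) with (tan b) by (unfold tan; field; split; lra).
  apply atan_tan. exact Hb.
Qed.

Lemma sqrt_aux (x y : R) : 0 < x -> sqrt (1 + (y / x)²) = sqrt (x ^ 2 + y ^ 2) / x.
Proof.
intros Hx.
replace (1 + (y / x)²) with ((x ^ 2 + y ^ 2) * (/ x)²) by (unfold Rsqr; field; lra).
rewrite sqrt_mult_alt.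
- rewrite sqrt_Rsqr. field; lra. left; apply Rinv_0_lt_compat; exact Hx.
- assert (0 < x^2) by (apply pow2_gt_0; lra). assert (0 <= y^2) by apply pow2_ge_0. lra.
Qed.

Lemma Cexp_Lg (w : C) : 0 < fst w -> Cexp (Lg w) = w.
Proof.
intros Hx. destruct w as [x y]. simpl in Hx. unfold Lg, Cexp, Re, Im; simpl.
assert (HN : 0 < x ^ 2 + y ^ 2).
{ assert (0 < x^2) by (apply pow2_gt_0; lra). assert (0 <= y^2) by apply pow2_ge_0. lra. }
assert (Hs : exp (ln (x ^ 2 + y ^ 2) / 2) = sqrt (x ^ 2 + y ^ 2)).
{ rewrite <- Rpower_sqrt by exact HN. unfold Rpower. f_equal. field. }
assert (Hq := sqrt_lt_R0 _ HN).
simpl in Hs, Hq. rewrite Hs, cos_atan, sin_atan, sqrt_aux by exact Hx. simpl.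
apply injective_projections; simpl; field; split; lra.
Qed.

Lemma Clog_Lg (w : C) : 0 < fst w -> Clog w = Lg w.
Proof.
intros Hx. destruct w as [x y]. simpl in Hx. unfold Clog, Lg, Carg, Re, Im; simpl.
destruct (Rlt_dec 0 x) as [_|C]; [|lra].
f_equal. unfold Cmod. simpl.
assert (HN : 0 < x * (x * 1) + y * (y * 1)) by nra.
rewrite <- Rpower_sqrt by exact HN. unfold Rpower. rewrite ln_exp. field.
Qed.

Lemma Cpow_pos (w : C) (p : R) : 0 < fst w -> Defs.Cpow w p = Cexp (Cmult (RtoC p) (Lg w)).
Proof.
intros Hx. unfold Defs.Cpow. destruct (Req_EM_T (Cmod w) 0) as [E|E].
- apply Cmod_eq_0 in E. rewrite E in Hx. simpl in Hx. lra.
- rewrite Clog_Lg by exact Hx. reflexivity.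
Qed.

Lemma rpow_pos s p : 0 < s -> rpow s p = Rpower s p.
Proof. intros H; unfold rpow; destruct (Rlt_dec 0 s); [reflexivity|lra]. Qed.
Lemma rpow_le0 s p : s <= 0 -> rpow s p = 0.
Proof. intros H; unfold rpow; destruct (Rlt_dec 0 s); [lra|reflexivity]. Qed.
Lemma rpow_gt0 s p : 0 < s -> 0 < rpow s p.
Proof. intros H; rewrite rpow_pos by exact H; apply exp_pos. Qed.
Lemma rpow_1 p : rpow 1 p = 1.
Proof. rewrite rpow_pos by lra. unfold Rpower. rewrite ln_1, Rmult_0_r. apply exp_0. Qed.
Lemma rpow_mult t y p : 0 < t -> rpow (t * y) p = Rpower t p * rpow y p.
Proof.
intros Ht. destruct (Rlt_dec 0 y) as [Hy|Hy].
- rewrite !rpow_pos by nra. rewrite Rpower_mult_distr by lra. reflexivity.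
- rewrite !rpow_le0 by nra. ring.
Qed.

Lemma ball_R (x e y : R) : ball x e y <-> Rabs (y - x) < e.
Proof. reflexivity. Qed.

Lemma rpow_cont p x : 0 < p -> continuous (fun s => rpow s p) x.
Proof.
intros Hp.
destruct (Rlt_dec 0 x) as [Hx|Hx].
- apply (continuous_ext_loc _ (fun s => Rpower s p)).
  + exists (mkposreal _ Hx). intros y Hy. apply ball_R in Hy. cbn in Hy. symmetry.
    rewrite rpow_pos; [reflexivity|]. apply Rabs_def2 in Hy; cbn in Hy. lra.
  + apply (ex_derive_continuous (K := R_AbsRing) (V := R_NormedModule)).
    exists (p * Rpower x (p - 1)). apply is_derive_Reals. apply derivable_pt_lim_power. exact Hx.
- destruct (Rlt_dec x 0) as [Hx'|Hx'].
  + apply (continuous_ext_loc _ (fun _ => 0)).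
    * assert (Hx'' : 0 < - x) by lra. exists (mkposreal _ Hx''). intros y Hy. apply ball_R in Hy. cbn in Hy. symmetry.
      rewrite rpow_le0; [reflexivity|]. apply Rabs_def2 in Hy; cbn in Hy. lra.
    * apply continuous_const.
  + assert (x = 0) by lra. subst x.
    apply filterlim_locally. intros eps.
    assert (Hd : 0 < Rpower eps (/ p)) by apply exp_pos.
    exists (mkposreal _ Hd). intros y Hy. apply ball_R in Hy. cbn in Hy. apply ball_R.
    rewrite (rpow_le0 0) by lra.
    destruct (Rlt_dec 0 y) as [Hy0|Hy0].
    * rewrite rpow_pos by exact Hy0.
      assert (Hlt : Rpower y p < Rpower (Rpower eps (/ p)) p).
      { apply Rlt_Rpower_l; [exact Hp|]. split; [exact Hy0|]. apply Rabs_def2 in Hy; cbn in Hy. lra. }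
      rewrite Rpower_mult, Rinv_l, Rpower_1 in Hlt by (try lra; destruct eps; simpl; lra).
      rewrite Rminus_0_r. rewrite Rabs_pos_eq by (left; apply exp_pos). exact Hlt.
    * rewrite rpow_le0 by lra. rewrite Rminus_0_r, Rabs_R0. destruct eps; simpl; lra.
Qed.

Definition pth (z : C) (s : R) : C := Cmult (RtoC s) z.

Lemma dC_pth z s : dC (pth z) s z.
Proof.
unfold pth. refine (dC_ext _ _ _ _ _ (fun _ => eq_refl) _ (dC_mult _ _ _ _ _ (dC_RtoC _ _ _ (Rd_id s)) (dC_const z s))).
apply injective_projections; simpl; ring.
Qed.

Lemma Cmod_pth z s : Cmod (pth z s) = Rabs s * Cmod z.
Proof. unfold pth. rewrite Cmod_mult, Cmod_R. reflexivity. Qed.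

Lemma cont_of_dR (f : R -> R) s d : is_derive f s d -> continuous f s.
Proof. intros H. apply (ex_derive_continuous (K := R_AbsRing) (V := R_NormedModule)). exists d; exact H. Qed.

Lemma RInt_C_pair (F : R -> C) a b :
  ex_RInt (fun s => fst (F s)) a b -> ex_RInt (fun s => snd (F s)) a b ->
  RInt (V := C_R_CompleteNormedModule) F a b = (RInt (fun s => fst (F s)) a b, RInt (fun s => snd (F s)) a b).
Proof.
intros H1 H2. apply (is_RInt_unique (V := C_R_CompleteNormedModule)).
apply (is_RInt_fct_extend_pair (U := R_NormedModule) (V := R_NormedModule) F a b).
- exact (RInt_correct (V := R_CompleteNormedModule) _ _ _ H1).
- exact (RInt_correct (V := R_CompleteNormedModule) _ _ _ H2).
Qed.

Section Hsec.
Variables (alpha : R) (h : C -> C).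
Hypothesis Ha : 1 < alpha.
Hypothesis Hh : classP h.

Definition KR z s := rpow s (alpha - 1) * fst (h (pth z s)).
Definition KI z s := rpow s (alpha - 1) * snd (h (pth z s)).

Lemma h_dC z s : inD (pth z s) -> exists D, dC (fun s => h (pth z s)) s D.
Proof.
intros Hin. destruct Hh as [Han _]. destruct (Han _ Hin) as [D HD].
exists (Cmult D z). apply (dC_chain h (pth z) s z D (dC_pth z s) HD).
Qed.

Lemma cont_KR z s : inD (pth z s) -> continuous (KR z) s.
Proof.
intros Hin. destruct (h_dC z s Hin) as [D [H1 H2]].
apply (continuous_mult (K := R_AbsRing) (fun s => rpow s (alpha - 1)) (fun s => fst (h (pth z s)))).
- apply rpow_cont; lra.
- exact (cont_of_dR _ _ _ H1).
Qed.

Lemma cont_KI z s : inD (pth z s) -> continuous (KI z) s.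
Proof.
intros Hin. destruct (h_dC z s Hin) as [D [H1 H2]].
apply (continuous_mult (K := R_AbsRing) (fun s => rpow s (alpha - 1)) (fun s => snd (h (pth z s)))).
- apply rpow_cont; lra.
- exact (cont_of_dR _ _ _ H2).
Qed.

Lemma inD_pth z s T : 0 <= T -> T * Cmod z < 1 -> Rmin 0 T <= s <= Rmax 0 T -> inD (pth z s).
Proof.
intros HT HTz Hs. rewrite Rmin_left in Hs by lra. rewrite Rmax_right in Hs by lra.
unfold inD. rewrite Cmod_pth. rewrite Rabs_pos_eq by lra.
assert (Hc := Cmod_ge_0 z). nra.
Qed.

Lemma ex_KR z T : 0 <= T -> T * Cmod z < 1 -> ex_RInt (KR z) 0 T.
Proof. intros HT HTz. apply (ex_RInt_continuous (V := R_CompleteNormedModule)). intros s Hs. apply cont_KR. exact (inD_pth z s T HT HTz Hs). Qed.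
Lemma ex_KI z T : 0 <= T -> T * Cmod z < 1 -> ex_RInt (KI z) 0 T.
Proof. intros HT HTz. apply (ex_RInt_continuous (V := R_CompleteNormedModule)). intros s Hs. apply cont_KI. exact (inD_pth z s T HT HTz Hs). Qed.

Lemma g_comp z : inD z -> Bazilevic_g alpha h z = (alpha * RInt (KR z) 0 1, alpha * RInt (KI z) 0 1).
Proof.
intros Hz. unfold Bazilevic_g.
assert (Hz1 : 1 * Cmod z < 1) by (unfold inD in Hz; lra).
set (k := fun s : R => Cmult (RtoC (rpow s (alpha - 1))) (h (Cmult (RtoC s) z))).
assert (E1 : forall s, fst (k s) = KR z s) by (intros s; unfold k, KR, pth; simpl; ring).
assert (E2 : forall s, snd (k s) = KI z s) by (intros s; unfold k, KI, pth; simpl; ring).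
rewrite RInt_C_pair.
- rewrite (RInt_ext (fun s => fst (k s)) (KR z)) by (intros; apply E1).
  rewrite (RInt_ext (fun s => snd (k s)) (KI z)) by (intros; apply E2).
  apply injective_projections; simpl; rewrite ?Rmult_0_l, ?Rminus_0_r, ?Rplus_0_r; reflexivity.
- eapply ex_RInt_ext; [|apply (ex_KR z 1); lra]. intros s _. symmetry; apply E1.
- eapply ex_RInt_ext; [|apply (ex_KI z 1); lra]. intros s _. symmetry; apply E2.
Qed.

Lemma Reg_pos z : inD z -> 0 < fst (Bazilevic_g alpha h z).
Proof.
intros Hz. rewrite g_comp by exact Hz. simpl.
apply Rmult_lt_0_compat; [lra|].
apply RInt_gt_0; [lra| |].
- intros s Hs. unfold KR. apply Rmult_lt_0_compat. apply rpow_gt0; lra.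
  destruct Hh as [_ [_ Hp]]. apply Hp. unfold inD. rewrite Cmod_pth. rewrite Rabs_pos_eq by lra.
  unfold inD in Hz. assert (Hc := Cmod_ge_0 z). nra.
- intros s Hs. apply cont_KR. apply (inD_pth z s 1); [lra| unfold inD in Hz; lra|].
  rewrite Rmin_left, Rmax_right; lra.
Qed.

Lemma Rpower_t_alpha t : 0 < t -> t * Rpower t (alpha - 1) = Rpower t alpha.
Proof.
intros Ht. rewrite <- (Rpower_1 t) at 1 by exact Ht. rewrite <- Rpower_plus. f_equal. ring.
Qed.

Lemma pth_pth z t y : pth z (t * y + 0) = pth (pth z t) y.
Proof. unfold pth. apply injective_projections; simpl; ring. Qed.

Lemma subst_KR z t : 0 < t -> t * Cmod z < 1 -> RInt (KR z) 0 t = Rpower t alpha * RInt (KR (pth z t)) 0 1.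
Proof.
intros Ht Htz.
assert (Hw : 1 * Cmod (pth z t) < 1) by (rewrite Cmod_pth, Rabs_pos_eq by lra; lra).
assert (H := RInt_comp_lin (V := R_CompleteNormedModule) (KR z) t 0 0 1).
rewrite Rmult_0_r, Rmult_1_r, !Rplus_0_r in H.
rewrite <- H by (apply ex_KR; lra).
rewrite (RInt_ext _ (fun y => scal (Rpower t alpha) (KR (pth z t) y))).
- rewrite (RInt_scal (V := R_CompleteNormedModule)) by (apply ex_KR; lra). reflexivity.
- intros y Hy. unfold KR. rewrite pth_pth. rewrite Rplus_0_r, rpow_mult by exact Ht.
  rewrite <- Rpower_t_alpha by exact Ht. cbn -[rpow Rpower pth]. ring.
Qed.

Lemma subst_KI z t : 0 < t -> t * Cmod z < 1 -> RInt (KI z) 0 t = Rpower t alpha * RInt (KI (pth z t)) 0 1.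
Proof.
intros Ht Htz.
assert (Hw : 1 * Cmod (pth z t) < 1) by (rewrite Cmod_pth, Rabs_pos_eq by lra; lra).
assert (H := RInt_comp_lin (V := R_CompleteNormedModule) (KI z) t 0 0 1).
rewrite Rmult_0_r, Rmult_1_r, !Rplus_0_r in H.
rewrite <- H by (apply ex_KI; lra).
rewrite (RInt_ext _ (fun y => scal (Rpower t alpha) (KI (pth z t) y))).
- rewrite (RInt_scal (V := R_CompleteNormedModule)) by (apply ex_KI; lra). reflexivity.
- intros y Hy. unfold KI. rewrite pth_pth. rewrite Rplus_0_r, rpow_mult by exact Ht.
  rewrite <- Rpower_t_alpha by exact Ht. cbn -[rpow Rpower pth]. ring.
Qed.

Lemma near1 z : inD z -> locally 1 (fun b => 0 < b /\ b * Cmod z < 1).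
Proof.
intros Hz. unfold inD in Hz. assert (Hc := Cmod_ge_0 z).
assert (Hd : 0 < (1 - Cmod z) / 2) by lra.
exists (mkposreal _ Hd). intros b Hb. apply ball_R in Hb. apply Rabs_def2 in Hb; cbn in Hb. simpl in Hb.
split; nra.
Qed.

Lemma pth_1 z : pth z 1 = z.
Proof. unfold pth. apply injective_projections; simpl; ring. Qed.

Lemma der_KR z : inD z -> is_derive (fun t => RInt (KR z) 0 t) 1 (fst (h z)).
Proof.
intros Hz.
assert (E : KR z 1 = fst (h z)) by (unfold KR; rewrite rpow_1, pth_1; ring).
rewrite <- E.
apply (is_derive_RInt (V := R_NormedModule) (KR z) (fun t => RInt (KR z) 0 t) 0 1).
- apply (filter_imp _ _ (fun b Hb => RInt_correct (V := R_CompleteNormedModule) _ _ _ (ex_KR z b (Rlt_le _ _ (proj1 Hb)) (proj2 Hb)))).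
  apply near1; exact Hz.
- apply cont_KR. rewrite pth_1. exact Hz.
Qed.

Lemma der_KI z : inD z -> is_derive (fun t => RInt (KI z) 0 t) 1 (snd (h z)).
Proof.
intros Hz.
assert (E : KI z 1 = snd (h z)) by (unfold KI; rewrite rpow_1, pth_1; ring).
rewrite <- E.
apply (is_derive_RInt (V := R_NormedModule) (KI z) (fun t => RInt (KI z) 0 t) 0 1).
- apply (filter_imp _ _ (fun b Hb => RInt_correct (V := R_CompleteNormedModule) _ _ _ (ex_KI z b (Rlt_le _ _ (proj1 Hb)) (proj2 Hb)))).
  apply near1; exact Hz.
- apply cont_KI. rewrite pth_1. exact Hz.
Qed.

End Hsec.

Lemma Rpower_1base x : Rpower 1 x = 1.
Proof. unfold Rpower. rewrite ln_1, Rmult_0_r. apply exp_0. Qed.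

Lemma fst_RC (c : R) (w : C) : fst (Cmult (RtoC c) w) = c * fst w.
Proof. simpl. ring. Qed.
Lemma snd_RC (c : R) (w : C) : snd (Cmult (RtoC c) w) = c * snd w.
Proof. simpl. ring. Qed.

Lemma snd_Lg w : snd (Lg w) = atan (snd w / fst w).
Proof. reflexivity. Qed.

Section Fsec.
Variables (alpha : R) (f f' f'' h : C -> C).
Hypothesis Ha : 1 < alpha.
Hypothesis Hh : classP h.
Hypothesis Hrep : forall z, inD z -> f z = Cmult z (Defs.Cpow (Bazilevic_g alpha h z) (/ alpha)).
Hypothesis Hf' : forall z, inD z -> is_derive (K := C_AbsRing) (V := C_NormedModule) f z (f' z).
Hypothesis Hf'' : forall z, inD z -> is_derive (K := C_AbsRing) (V := C_NormedModule) f' z (f'' z).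

Let g := Bazilevic_g alpha h.
Definition vv z := Cmult (RtoC (/ alpha)) (Lg (g z)).

Lemma f_rep z : inD z -> f z = Cmult z (Cexp (vv z)).
Proof. intros Hz. rewrite Hrep by exact Hz. rewrite Cpow_pos. reflexivity. apply Reg_pos; assumption. Qed.

Lemma vv_snd z : - (PI / 2) < snd (vv z) < PI / 2.
Proof.
unfold vv. rewrite snd_RC. unfold Lg at 1. simpl snd.
assert (Hb := atan_bound (snd (g z) / fst (g z))).
assert (Hi : 0 < / alpha < 1).
{ split. apply Rinv_0_lt_compat; lra. rewrite <- Rinv_1. apply Rinv_lt_contravar; lra. }
assert (HP := PI_RGT_0).
set (a := atan _) in *. 
split; nra.
Qed.

Lemma q_eq z : inD z -> z <> 0%C -> Cmult (f z) (Cinv z) = Cexp (vv z).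
Proof. intros Hz Hz0. rewrite f_rep by exact Hz. field. exact Hz0. Qed.

Lemma q_pos z : inD z -> z <> 0%C -> 0 < fst (Cmult (f z) (Cinv z)).
Proof.
intros Hz Hz0. rewrite q_eq by assumption. unfold Cexp, Re, Im. simpl fst.
apply Rmult_lt_0_compat. apply exp_pos. apply cos_gt_0; apply vv_snd.
Qed.

Lemma Lg_q z : inD z -> z <> 0%C -> Lg (Cmult (f z) (Cinv z)) = vv z.
Proof. intros Hz Hz0. rewrite q_eq by assumption. apply Lg_Cexp, vv_snd. Qed.

Lemma g_eq z : inD z -> z <> 0%C -> g z = Cexp (Cmult (RtoC alpha) (Lg (Cmult (f z) (Cinv z)))).
Proof.
intros Hz Hz0. rewrite Lg_q by assumption. unfold vv.
replace (Cmult (RtoC alpha) (Cmult (RtoC (/ alpha)) (Lg (g z)))) with (Lg (g z)).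
- symmetry. apply Cexp_Lg. apply Reg_pos; assumption.
- apply injective_projections; simpl; field; lra.
Qed.

Lemma f_neq0 z : inD z -> z <> 0%C -> f z <> 0%C.
Proof. intros Hz Hz0. rewrite f_rep by exact Hz. apply Cmult_neq_0; [exact Hz0| apply Cexp_neq0]. Qed.

Definition Lq (w : C) := Lg (Cmult (f w) (Cinv w)).

Lemma dC_Lq (p : R -> C) t dp : dC p t dp -> inD (p t) -> p t <> 0%C ->
  dC (fun s => Lq (p s)) t (Cmult dp (Cminus (Cmult (f' (p t)) (Cinv (f (p t)))) (Cinv (p t)))).
Proof.
intros Hp Hin H0.
assert (H1 := dC_chain f p t dp (f' (p t)) Hp (Hf' _ Hin)).
assert (H2 := dC_inv p t dp H0 Hp).
assert (H3 := dC_mult _ _ t _ _ H1 H2).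
assert (H4 := dC_Lg _ t _ (q_pos _ Hin H0) H3).
refine (dC_ext _ _ _ _ _ (fun s => eq_refl) _ H4).
assert (Hf0 := f_neq0 _ Hin H0).
field. split; assumption.
Qed.

Lemma pth_neq0 (z : C) (t : R) : z <> 0%C -> 0 < t -> pth z t <> 0%C.
Proof.
intros Hz Ht. unfold pth. apply Cmult_neq_0; [|exact Hz].
intros E. injection E as E1. lra.
Qed.

Lemma inD_pth' (z : C) (t : R) : 0 < t -> t * Cmod z < 1 -> inD (pth z t).
Proof. intros Ht Htz. unfold inD. rewrite Cmod_pth, Rabs_pos_eq by lra. exact Htz. Qed.

Lemma psi_fst z : inD z -> is_derive (fun t => fst (Cmult (RtoC (Rpower t alpha)) (g (pth z t)))) 1 (alpha * fst (h z)).
Proof.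
intros Hz.
apply (is_derive_ext_loc (fun t => alpha * RInt (KR alpha h z) 0 t)).
- apply (filter_imp (fun b => 0 < b /\ b * Cmod z < 1)); [|apply near1; exact Hz].
  intros b Hb. { destruct Hb as [Hb Hbz]. rewrite fst_RC. unfold g.
       rewrite (g_comp alpha h Ha Hh (pth z b) (inD_pth' z b Hb Hbz)). simpl fst.
       rewrite (subst_KR alpha h Ha Hh z b Hb Hbz). match goal with |- ?a = ?b => change (@eq R a b) end; ring. }
- apply Rd_val with (1 := Rd_mult _ _ _ _ _ (Rd_const alpha 1) (der_KR alpha h Ha Hh z Hz)). ring.
Qed.

Lemma psi_snd z : inD z -> is_derive (fun t => snd (Cmult (RtoC (Rpower t alpha)) (g (pth z t)))) 1 (alpha * snd (h z)).
Proof.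
intros Hz.
apply (is_derive_ext_loc (fun t => alpha * RInt (KI alpha h z) 0 t)).
- apply (filter_imp (fun b => 0 < b /\ b * Cmod z < 1)); [|apply near1; exact Hz].
  intros b Hb. { destruct Hb as [Hb Hbz]. rewrite snd_RC. unfold g.
       rewrite (g_comp alpha h Ha Hh (pth z b) (inD_pth' z b Hb Hbz)). simpl snd.
       rewrite (subst_KI alpha h Ha Hh z b Hb Hbz). match goal with |- ?a = ?b => change (@eq R a b) end; ring. }
- apply Rd_val with (1 := Rd_mult _ _ _ _ _ (Rd_const alpha 1) (der_KI alpha h Ha Hh z Hz)). ring.
Qed.

Lemma h_eq z : inD z -> z <> 0%C -> h z = Cmult (f' z) (Cexp (Cmult (RtoC (alpha - 1)) (Lq z))).
Proof.
intros Hz Hz0.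
assert (A1 : is_derive (fun t => Rpower t alpha) 1 (alpha * Rpower 1 (alpha - 1))).
{ apply is_derive_Reals. apply derivable_pt_lim_power. lra. }
assert (Hin1 : inD (pth z 1)) by (rewrite pth_1; exact Hz).
assert (Hn1 : pth z 1 <> 0%C) by (rewrite pth_1; exact Hz0).
assert (D5 := dC_mult _ _ 1 _ _ (dC_RtoC _ _ _ A1)
   (dC_Cexp _ 1 _ (dC_mult _ _ 1 _ _ (dC_const (RtoC alpha) 1) (dC_Lq (pth z) 1 z (dC_pth z 1) Hin1 Hn1)))).
match type of D5 with dC _ _ ?E => set (EE := E) in D5 end.
assert (D6 : dC (fun t => Cmult (RtoC (Rpower t alpha)) (g (pth z t))) 1 EE).
{ refine (dC_ext_loc _ _ _ _ _ D5).
  apply (filter_imp (fun b => 0 < b /\ b * Cmod z < 1)); [|apply near1; exact Hz].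
  intros b Hb. destruct Hb as [Hb Hbz]. simpl. f_equal. symmetry. unfold g.
  apply g_eq. apply inD_pth'; assumption. apply pth_neq0; assumption. }
destruct D6 as [D6a D6b].
assert (E1 : fst EE = alpha * fst (h z)).
{ rewrite <- (is_derive_unique _ _ _ D6a). apply is_derive_unique. apply psi_fst; exact Hz. }
assert (E2 : snd EE = alpha * snd (h z)).
{ rewrite <- (is_derive_unique _ _ _ D6b). apply is_derive_unique. apply psi_snd; exact Hz. }
assert (HE : EE = Cmult (RtoC alpha) (h z)).
{ apply injective_projections; rewrite ?fst_RC, ?snd_RC; assumption. }
unfold EE in HE. clear EE D5 D6a D6b E1 E2.
rewrite !pth_1, !Rpower_1base, Rmult_1_r in HE.
assert (HX : Cexp (Cmult (RtoC alpha) (Lq z)) = Cmult (Cexp (Cmult (RtoC (alpha - 1)) (Lq z))) (Cmult (f z) (Cinv z))).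
{ rewrite <- (Cexp_Lg (Cmult (f z) (Cinv z))) by (apply q_pos; assumption).
  rewrite <- Cexp_add. f_equal. unfold Lq. apply injective_projections; simpl; ring. }
rewrite HX in HE.
assert (Hf0 := f_neq0 z Hz Hz0).
assert (Ha0 : RtoC alpha <> 0%C) by (intros E; injection E; lra).
assert (Hh' : h z = Cmult (Cinv (RtoC alpha)) (Cmult (RtoC alpha) (h z))) by (field; exact Ha0).
rewrite Hh', <- HE. field. repeat split; assumption.
Qed.

Definition zth (r th : R) : C := Cmult (RtoC r) (Cexp ((0%R, th) : C)).

Lemma dC_zth r th : dC (zth r) th (Cmult (zth r th) ((0%R, 1%R) : C)).
Proof.
assert (D0 : dC (fun t => ((0%R, t) : C)) th ((0%R, 1%R) : C)).
{ split; simpl. apply Rd_const. apply Rd_id. }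
assert (D := dC_mult _ _ th _ _ (dC_const (RtoC r) th) (dC_Cexp _ th _ D0)).
refine (dC_ext _ _ _ _ _ (fun _ => eq_refl) _ D).
unfold zth. apply injective_projections; simpl; ring.
Qed.

Lemma Cmod_Cexp_i th : Cmod (Cexp ((0%R, th) : C)) = 1.
Proof.
unfold Cmod, Cexp, Re, Im; simpl. rewrite exp_0.
replace (1 * cos th * (1 * cos th * 1) + 1 * sin th * (1 * sin th * 1)) with (Rsqr (sin th) + Rsqr (cos th)) by (unfold Rsqr; ring).
rewrite sin2_cos2. apply sqrt_1.
Qed.

Lemma inD_zth r th : 0 < r < 1 -> inD (zth r th).
Proof. intros Hr. unfold inD, zth. rewrite Cmod_mult, Cmod_R, Cmod_Cexp_i, Rabs_pos_eq by lra. lra. Qed.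

Lemma zth_neq0 r th : 0 < r -> zth r th <> 0%C.
Proof.
intros Hr. unfold zth. apply Cmult_neq_0; [|apply Cexp_neq0].
intros E. injection E as E1. lra.
Qed.

Definition WW r th := Cmult (f' (zth r th)) (Cexp (Cmult (RtoC (alpha - 1)) (Lq (zth r th)))).

Definition GG r th := alpha * th + snd (Lg (WW r th)).

Lemma GG_deriv r th : 0 < r < 1 ->
  is_derive (GG r) th (Re (Pfun alpha f f' f'' (zth r th))).
Proof.
intros Hr.
assert (Hin := inD_zth r th Hr). assert (Hn0 := zth_neq0 r th (proj1 Hr)).
assert (DW := dC_mult _ _ th _ _ (dC_chain f' (zth r) th _ (f'' (zth r th)) (dC_zth r th) (Hf'' _ Hin))
   (dC_Cexp _ th _ (dC_mult _ _ th _ _ (dC_const (RtoC (alpha - 1)) th) (dC_Lq (zth r) th _ (dC_zth r th) Hin Hn0)))).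
assert (HW : WW r th = h (zth r th)) by (unfold WW; symmetry; apply h_eq; assumption).
assert (HWpos : 0 < fst (WW r th)) by (rewrite HW; destruct Hh as [_ [_ Hp]]; apply Hp; exact Hin).
assert (DL := dC_Lg (WW r) th _ HWpos DW).
destruct DL as [_ DL2].
unfold GG.
apply Rd_val with (1 := Rd_plus _ _ _ _ _ (Rd_mult _ _ _ _ _ (Rd_const alpha th) (Rd_id th)) DL2).
set (z := zth r th) in *.
set (X := Cexp (Cmult (RtoC (alpha - 1)) (Lq z))).
assert (HX0 : X <> 0%C) by apply Cexp_neq0.
assert (Hf0 := f_neq0 z Hin Hn0).
assert (Hf'0 : f' z <> 0%C).
{ intros E. assert (HW0 : WW r th = 0%C) by (unfold WW; fold z; rewrite E; ring).
  rewrite HW0 in HWpos. simpl in HWpos. lra. }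
set (A := Cdiv (Cmult z (f'' z)) (f' z)).
set (B := Cdiv (Cmult z (f' z)) (f z)).
assert (Hk : Cmult (Cplus (Cmult (Cmult (f'' z) (Cmult z ((0%R, 1%R) : C))) X)
     (Cmult (f' z) (Cmult X (Cplus (Cmult 0 (Lq z)) (Cmult (RtoC (alpha - 1))
        (Cmult (Cmult z ((0%R, 1%R) : C)) (Cminus (Cmult (f' z) (Cinv (f z))) (Cinv z))))))))
   (Cinv (WW r th)) = Cmult ((0%R, 1%R) : C) (Cplus A (Cmult (RtoC (alpha - 1)) (Cminus B 1)))).
{ unfold WW. fold z. fold X. unfold A, B, Cdiv. field. repeat split; assumption. }
unfold WW in Hk. fold z in Hk. fold X in Hk. unfold WW. fold z. fold X. rewrite Hk.
unfold Pfun, Re. fold A. fold B. simpl. ring.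
Qed.

Lemma GG_bound r t1 t2 : t1 < t2 -> GG r t2 - GG r t1 > - PI.
Proof.
intros Ht. unfold GG. rewrite !snd_Lg.
assert (H1 := atan_bound (snd (WW r t2) / fst (WW r t2))).
assert (H2 := atan_bound (snd (WW r t1) / fst (WW r t1))).
assert (alpha * t2 - alpha * t1 > 0) by nra.
lra.
Qed.

End Fsec.

Theorem mainTheorem3 (alpha : R) (f f' f'' : C -> C) :
  1 < alpha ->
  classB1 alpha f ->
  (forall z, inD z -> is_derive (K := C_AbsRing) (V := C_NormedModule) f z (f' z)) ->
  (forall z, inD z -> is_derive (K := C_AbsRing) (V := C_NormedModule) f' z (f'' z)) ->
  forall r theta1 theta2 : R, 0 < r < 1 -> theta1 < theta2 ->
  RInt (fun theta : R =>
          Re (Pfun alpha f f' f'' (Cmult (RtoC r) (Cexp ((0%R, theta) : C)))))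
       theta1 theta2 > - PI.
Proof.
intros Ha HB Hf' Hf'' r theta1 theta2 Hr Ht.
destruct HB as [_ [h [Hh Hrep]]].
set (FF := fun theta : R => Re (Pfun alpha f f' f'' (Cmult (RtoC r) (Cexp ((0%R, theta) : C))))).
destruct (classic (ex_RInt FF theta1 theta2)) as [[I HI]|HnI].
- rewrite (is_RInt_unique (V := R_CompleteNormedModule) FF theta1 theta2 I HI).
  rewrite (ftc_lite (GG alpha f f' r) FF (fun x => GG_deriv alpha f f' f'' h Ha Hh Hrep Hf' Hf'' r x Hr) theta1 theta2 I Ht HI).
  apply (GG_bound alpha f f' Ha). exact Ht.
- rewrite RInt_not_ex by exact HnI. assert (HP := PI_RGT_0). lra.
Qed.
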